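(* Let $L|K$ be a field extension and assume that $L$ admits a $K$-rational place $\xi$. Then the map $\iota:M(K)\to M(L)$, $\zeta\mapsto\zeta\circ\xi$, is a continuous injective map compatible with restriction.
   Context: A $K$-rational place of $L$ is a place of $L$ which is the identity on $K$ and whose image is $K\cup\{\infty\}$. For a field $K$, $M(K)$ is the set of $\mathbb R$-places $K\to\mathbb R\cup\{\infty\}$, with topology generated by the subbasis $H'(b)=\{\zeta\in M(K)\mid \infty\ne\zeta(b)>0\}$, $b\in K$. A map $\iota:M(K)\to M(L)$ is compatible with restriction if $\iota(\zeta)|_K=\zeta$ for all $\zeta\in M(K)$. *)

(* Defs.v *)
From mathcomp Require Import all_boot all_order all_algebra.
From mathcomp Require Import reals.
Set Implicit Arguments. Unset Strict Implicit. Unset Printing Implicit Defensive.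
Import Order.TTheory GRing.Theory Num.Theory.
Local Open Scope ring_scope.

(* A place of the field F with values in E \cup {oo}; [None] encodes oo.
   Axioms: the finite locus O = {x | phi x <> oo} is a subring on which phi
   is a ring morphism, and for x <> 0, phi x = oo iff phi (x^-1) = 0
   (so O is a valuation ring with maximal ideal phi^-1(0)). *)
Definition is_place (F E : fieldType) (phi : F -> option E) : Prop :=
  [/\ phi 1 = Some 1,
      (forall x a, phi x = Some a -> phi (- x) = Some (- a)),
      (forall x y a b, phi x = Some a -> phi y = Some b ->
          phi (x + y) = Some (a + b)),
      (forall x y a b, phi x = Some a -> phi y = Some b ->
          phi (x * y) = Some (a * b)) &
      (forall x, x != 0 -> (phi x = None <-> phi x^-1 = Some 0))].

Definition K_rational_place (K L : fieldType) (sigma : {rmorphism K -> L})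
  (xi : L -> option K) : Prop :=
  is_place xi /\ forall k, xi (sigma k) = Some k.

Definition Mset (R : realType) (K : fieldType) (zeta : K -> option R) : Prop :=
  is_place zeta.

Definition Hsub (R : realType) (K : fieldType) (b : K) (zeta : K -> option R) : Prop :=
  Mset zeta /\ exists r : R, zeta b = Some r /\ 0 < r.

(* Open subsets of M(K) for the topology generated by the subbasis H'(b):
   unions of finite intersections of subbasic sets (the empty intersection
   being all of M(K)). *)
Definition Mopen (R : realType) (K : fieldType) (U : (K -> option R) -> Prop) : Prop :=
  (forall zeta, U zeta -> Mset zeta) /\
  forall zeta, U zeta ->
    exists s : seq K,
      (forall b, b \in s -> Hsub b zeta) /\
      (forall eta, Mset eta -> (forall b, b \in s -> Hsub b eta) -> U eta).

Definition Mcontinuous (R : realType) (K L : fieldType)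
  (f : (K -> option R) -> (L -> option R)) : Prop :=
  forall V : (L -> option R) -> Prop, Mopen V ->
    Mopen (fun zeta : K -> option R => Mset zeta /\ V (f zeta)).

Definition comp_place (K L E : Type) (zeta : K -> option E) (xi : L -> option K) :
  L -> option E :=
  fun x => match xi x with Some a => zeta a | None => None end.

(* Main.v *)
Require Import Defs.
From mathcomp Require Import all_boot all_order all_algebra.
From mathcomp Require Import reals.
From Stdlib Require Import FunctionalExtensionality.
Import GRing.Theory.
Local Open Scope ring_scope.

Lemma place0 (F E : fieldType) (phi : F -> option E) : is_place phi -> phi 0 = Some 0.
Proof.
case=> h1 hN hD _ _.
have := hD _ _ _ _ h1 (hN _ _ h1). by rewrite !subrr.
Qed.

Lemma comp_is_place (K L : fieldType) (R : fieldType) (sigma : {rmorphism K -> L})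
  (xi : L -> option K) (zeta : K -> option R) :
  K_rational_place sigma xi -> is_place zeta -> is_place (comp_place zeta xi).
Proof.
move=> [Pxi Hs] Pz.
have z0 := @place0 _ _ zeta Pz. have x0 := @place0 _ _ xi Pxi.
move: (Pxi) (Pz) => [x1 xN xD xM xI] [z1 zN zD zM zI].
rewrite /comp_place; split.
- by rewrite x1 z1.
- move=> x a; case E: (xi x) => [c|] //= H.
  by rewrite (xN _ _ E); apply: zN.
- move=> x y a b; case E: (xi x) => [c|] //; case F: (xi y) => [d|] // Ha Hb.
  by rewrite (xD _ _ _ _ E F); apply: zD.
- move=> x y a b; case E: (xi x) => [c|] //; case F: (xi y) => [d|] // Ha Hb.
  by rewrite (xM _ _ _ _ E F); apply: zM.
- move=> x nx.
  have nxi : x^-1 != 0 by rewrite invr_eq0.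
  case E: (xi x) => [c|].
  + have [c0|nc] := eqVneq c 0.
    * subst c.
      have : xi x^-1 = None by apply/(xI _ nxi); rewrite invrK.
      move=> ->; rewrite z0; split=> // ; discriminate.
    * case F: (xi x^-1) => [d|]; last first.
        by move/(xI _ nxi): F; rewrite invrK E => -[] /eqP; rewrite (negbTE nc).
      have := xM _ _ _ _ E F; rewrite mulfV // x1 => -[] cd.
      have -> : d = c^-1 by rewrite -[d](mulKf nc) -cd mulr1.
      exact: zI.
  + have -> : xi x^-1 = Some 0 by apply/xI.
    by rewrite z0.
Qed.

Theorem theorem9p1 (R : realType) (K L : fieldType) (sigma : {rmorphism K -> L})
  (xi : L -> option K) :
  K_rational_place sigma xi ->
  [/\ (forall zeta : K -> option R, Mset zeta -> Mset (comp_place zeta xi)),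
      (forall z1 z2 : K -> option R, Mset z1 -> Mset z2 ->
          comp_place z1 xi = comp_place z2 xi -> z1 = z2),
      (forall zeta : K -> option R, Mset zeta ->
          forall k : K, comp_place zeta xi (sigma k) = zeta k) &
      Mcontinuous (fun zeta : K -> option R => comp_place zeta xi)].
Proof.
move=> Hx.
have Hc : forall zeta : K -> option R, Mset zeta -> Mset (comp_place zeta xi).
  by move=> zeta Hz; apply: comp_is_place Hx Hz.
have Hr : forall zeta : K -> option R, forall k : K, comp_place zeta xi (sigma k) = zeta k.
  by move=> zeta k; rewrite /comp_place (proj2 Hx k).
split => //.
- move=> z1 z2 _ _ E; apply: functional_extensionality => k.
  by rewrite -!Hr E.
- move=> V [VM Vo]; split; first by move=> zeta [].
  move=> zeta [Mz Vz].
  have [s [Hs1 Hs2]] := Vo _ Vz.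
  pose f := fun b : L => match xi b with Some c => c | None => 0 end.
  exists (map f s); split.
  + move=> b /mapP [b' Hb' ->].
    have [_ [r [Er Pr]]] := Hs1 _ Hb'.
    split => //; exists r; split => //.
    move: Er; rewrite /comp_place /f; by case: (xi b').
  + move=> eta Me Ha; split => //; apply: Hs2; first exact: Hc.
    move=> b Hb; split; first exact: Hc.
    have [_ [r [Er Pr]]] := Hs1 _ Hb.
    have [_ [r' [Er' Pr']]] := Ha _ (map_f f Hb).
    exists r'; split => //.
    move: Er Er'; rewrite /comp_place /f; by case: (xi b).
Qed.
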